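(* Let $T>0$, $H_T=(0,T)\times(0,\infty)$, let $\tilde U\in C([0,T])$ with $\tilde U\le0$, and let $w_0\ge0$ be continuous on $[0,\infty)$. Let $w$ be a classical solution (continuous on $\overline{H_T}$, $C^1$ in $t$ and $C^2$ in $y$ in $H_T$) of $$\partial_tw-w^2+\partial_y^{-1}(w+\tilde U)\,\partial_yw-2\tilde Uw+\int_{+\infty}^yw\,dy'-\partial_y^2w=0\ \text{ in }H_T,$$ $$w|_{t=0}=w_0,\qquad w|_{y=0}=-\tilde U(t),\qquad \lim_{y\to+\infty}w=0,$$ such that $\sup_{H_T}|w(t,y)|e^{y}<\infty$ and $w(t,y)e^{y}\to0$ as $y\to+\infty$ uniformly in $t\in[0,T]$. Then $w\ge0$ in $H_T$.
   Context: $\partial_y^{-1}f(t,y):=\int_0^yf(t,y')dy'$. (In the paper $w=\tilde u-\tilde U$ with $\tilde u(t,y)=-\partial_xu(t,0,y)$, $\tilde U(t)=-\partial_xU(t,0)$ for a solution $u$ of the geophysical boundary layer problem.) *)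

(* Defs.v *)
From Stdlib Require Import Reals Lra.
Open Scope R_scope.

Definition in_HT_closed (T t y : R) : Prop := 0 <= t <= T /\ 0 <= y.
Definition in_HT (T t y : R) : Prop := 0 < t < T /\ 0 < y.

Definition continuous_on2 (D : R -> R -> Prop) (f : R -> R -> R) : Prop :=
  forall t y, D t y ->
    forall eps, 0 < eps -> exists delta, 0 < delta /\
      forall s z, D s z -> Rabs (s - t) < delta -> Rabs (z - y) < delta ->
        Rabs (f s z - f t y) < eps.

Definition continuous_on1 (D : R -> Prop) (g : R -> R) : Prop :=
  forall x, D x -> forall eps, 0 < eps -> exists delta, 0 < delta /\
    forall z, D z -> Rabs (z - x) < delta -> Rabs (g z - g x) < eps.

Definition integral_eq (f : R -> R) (a b l : R) : Prop :=
  exists pr : Riemann_integrable f a b, RiemannInt pr = l.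

Definition improper_integral_eq (f : R -> R) (a l : R) : Prop :=
  forall eps, 0 < eps -> exists M, forall b, M <= b ->
    exists I, integral_eq f a b I /\ Rabs (I - l) < eps.

(* Main.v *)
Require Import Defs.
From Stdlib Require Import Reals.
From Coquelicot Require Import Coquelicot.
From Stdlib Require Import Lra ClassicalEpsilon.
Open Scope R_scope.
Lemma cont_kexp K x : continuity_pt (fun x => K * exp (- x)) x.
Proof.
  apply continuity_pt_mult. apply continuity_pt_const; intros ? ?; auto.
  apply (continuity_pt_comp (fun x => - x) exp). apply continuity_pt_opp, derivable_continuous_pt, derivable_pt_id.
  apply derivable_continuous_pt, derivable_pt_exp.
Qed.

Lemma int_exp (K a b : R) : a <= b ->
  exists pr : Riemann_integrable (fun x => K * exp (- x)) a b,
    RiemannInt pr = K * (exp (- a) - exp (- b)).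
Proof.
  intros Hab.
  assert (pr : Riemann_integrable (fun x => K * exp (- x)) a b).
  { apply continuity_implies_RiemannInt; auto. intros; apply cont_kexp. }
  exists pr. rewrite <- RInt_Reals.
  apply is_RInt_unique.
  assert (H := is_RInt_derive (fun x => - K * exp (- x)) (fun x => K * exp (- x)) a b).
  replace (K * (exp (- a) - exp (- b))) with (minus (- K * exp (- b)) (- K * exp (- a))).
  apply H.
  - intros x _. auto_derive; auto. ring.
  - intros x _. apply continuity_pt_filterlim. apply cont_kexp.
  - unfold minus, plus, opp; simpl. ring.
Qed.
Lemma quot_sign D h : h <> 0 -> D = (D / h) * h.
Proof. intros; field; auto. Qed.

Lemma min_left (f : R -> R) t0 l r : derivable_pt_lim f t0 l -> 0 < r ->
  (forall s, t0 - r < s < t0 -> f t0 <= f s) -> l <= 0.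
Proof.
  intros Hd Hr Hm. destruct (Rle_or_lt l 0) as [|Hl]; auto. exfalso.
  destruct (Hd l Hl) as [[d Hdp] Hd']. simpl in Hd'.
  assert (Hh1 : 0 < Rmin d r) by (apply Rmin_pos; auto).
  assert (Hh2 : Rmin d r <= r) by apply Rmin_r.
  assert (Hh3 : Rmin d r <= d) by apply Rmin_l.
  set (h := - (Rmin d r / 2)).
  assert (hneg : h < 0) by (unfold h; lra).
  assert (Hq := Hd' h (Rlt_not_eq _ _ hneg) ltac:(unfold h; rewrite Rabs_left; lra)).
  assert (Hs := Hm (t0 + h) ltac:(unfold h; lra)).
  apply Rabs_def2 in Hq. destruct Hq as [_ Hq].
  assert (E := quot_sign (f (t0 + h) - f t0) h (Rlt_not_eq _ _ hneg)).
  set (q := (f (t0 + h) - f t0) / h) in *.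
  assert (0 < q) by lra. nra.
Qed.

Lemma min_right (f : R -> R) t0 l r : derivable_pt_lim f t0 l -> 0 < r ->
  (forall s, t0 < s < t0 + r -> f t0 <= f s) -> 0 <= l.
Proof.
  intros Hd Hr Hm. destruct (Rle_or_lt 0 l) as [|Hl]; auto. exfalso.
  destruct (Hd (- l) ltac:(lra)) as [[d Hdp] Hd']. simpl in Hd'.
  assert (Hh1 : 0 < Rmin d r) by (apply Rmin_pos; auto).
  assert (Hh2 : Rmin d r <= r) by apply Rmin_r.
  assert (Hh3 : Rmin d r <= d) by apply Rmin_l.
  set (h := (Rmin d r / 2)).
  assert (hneg : 0 < h) by (unfold h; lra).
  assert (Hq := Hd' h (Rgt_not_eq _ _ hneg) ltac:(unfold h; rewrite Rabs_right; lra)).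
  assert (Hs := Hm (t0 + h) ltac:(unfold h; lra)).
  apply Rabs_def2 in Hq. destruct Hq as [Hq _].
  assert (E := quot_sign (f (t0 + h) - f t0) h (Rgt_not_eq _ _ hneg)).
  set (q := (f (t0 + h) - f t0) / h) in *.
  assert (q < 0) by lra. nra.
Qed.

Lemma min_second (f f' : R -> R) x0 l r : 0 < r ->
  (forall x, x0 - r < x < x0 + r -> derivable_pt_lim f x (f' x)) ->
  f' x0 = 0 -> derivable_pt_lim f' x0 l ->
  (forall x, x0 - r < x < x0 + r -> f x0 <= f x) -> 0 <= l.
Proof.
  intros Hr Hd H0 Hd2 Hm. destruct (Rle_or_lt 0 l) as [|Hl]; auto. exfalso.
  destruct (Hd2 (- l) ltac:(lra)) as [[d Hdp] Hd']. simpl in Hd'.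
  assert (Hh1 : 0 < Rmin d r) by (apply Rmin_pos; auto).
  assert (Hh2 : Rmin d r <= r) by apply Rmin_r.
  assert (Hh3 : Rmin d r <= d) by apply Rmin_l.
  set (h := (Rmin d r / 2)).
  assert (hneg : 0 < h) by (unfold h; lra).
  destruct (MVT_cor2 f f' x0 (x0 + h) ltac:(lra)) as [c [Hc1 Hc2]].
  { intros c Hc. apply Hd. unfold h in *; lra. }
  assert (Hq := Hd' (c - x0) ltac:(lra) ltac:(rewrite Rabs_right; unfold h in *; lra)).
  replace (x0 + (c - x0)) with c in Hq by ring. rewrite H0 in Hq.
  apply Rabs_def2 in Hq. destruct Hq as [Hq _].
  assert (E := quot_sign (f' c - 0) (c - x0) ltac:(lra)).
  set (q := (f' c - 0) / (c - x0)) in *.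
  assert (q < 0) by lra.
  assert (f' c < 0) by nra.
  assert (Hs := Hm (x0 + h) ltac:(unfold h; lra)).
  nra.
Qed.
Lemma cont_eps (f : R -> R) x0 :
  (forall eps, 0 < eps -> exists d, 0 < d /\ forall x, Rabs (x - x0) < d -> Rabs (f x - f x0) < eps) ->
  continuity_pt f x0.
Proof.
  intros H. unfold continuity_pt, continue_in, limit1_in, limit_in; simpl; unfold R_dist.
  intros eps He. destruct (H eps He) as [d [Hd H']]. exists d; split; auto.
  intros x [_ Hx]. apply H'; auto.
Qed.

Lemma min2d (z : R -> R -> R) a b c d : a <= b -> c <= d ->
  (forall x y, continuity_2d_pt z x y) ->
  exists t0 y0, a <= t0 <= b /\ c <= y0 <= d /\
    forall t y, a <= t <= b -> c <= y <= d -> z t0 y0 <= z t y.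
Proof.
  intros Hab Hcd Hz.
  assert (Hex : forall t, exists y, c <= y <= d /\ forall y', c <= y' <= d -> z t y <= z t y').
  { intros t. destruct (continuity_ab_min (fun y => z t y) c d Hcd) as [m [Hm1 Hm2]].
    - intros y _. apply cont_eps. intros eps He.
      destruct (Hz t y (mkposreal eps He)) as [[dl Hdl] Hd]. exists dl; split; auto.
      intros x Hx. apply Hd; simpl; auto. rewrite Rminus_diag, Rabs_R0; auto.
    - exists m; split; auto. }
  set (g := fun t => proj1_sig (constructive_indefinite_description _ (Hex t))).
  assert (Hg : forall t, c <= g t <= d /\ forall y', c <= y' <= d -> z t (g t) <= z t y').
  { intros t. unfold g. destruct (constructive_indefinite_description _ (Hex t)); simpl; auto. }
  set (h := fun t => z t (g t)).
  assert (Hh : forall x, continuity_pt h x).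
  { intros x. apply cont_eps. intros eps He.
    destruct (uniform_continuity_2d z (x - 1) (x + 1) c d
      ltac:(intros; apply Hz) (mkposreal (eps/2) ltac:(lra))) as [[dl Hdl] Hd]. simpl in Hd.
    exists (Rmin dl 1); split. apply Rmin_pos; lra.
    intros t Ht. assert (Ht1 := Rmin_l dl 1). assert (Ht2 := Rmin_r dl 1).
    assert (Hc : forall y, c <= y <= d -> Rabs (z t y - z x y) < eps / 2).
    { intros y Hy. apply Rabs_def2 in Ht. apply (Hd x y t y); auto; try lra.
      apply Rabs_def1; lra. rewrite Rminus_diag, Rabs_R0; lra. }
    destruct (Hg t) as [Hgt1 Hgt2]. destruct (Hg x) as [Hgx1 Hgx2].
    unfold h.
    assert (H1 := Hc (g t) Hgt1). assert (H2 := Hc (g x) Hgx1).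
    assert (H3 := Hgt2 (g x) Hgx1). assert (H4 := Hgx2 (g t) Hgt1).
    apply Rabs_def2 in H1. apply Rabs_def2 in H2. apply Rabs_def1; lra. }
  destruct (continuity_ab_min h a b Hab (fun c _ => Hh c)) as [t0 [Ht0' Ht0]].
  exists t0, (g t0). destruct (Hg t0) as [Hg1 _]. split; auto; split; auto.
  intros t y Ht Hy. apply Rle_trans with (h t). apply Ht0'; auto.
  unfold h. apply (proj2 (Hg t)); auto.
Qed.

Lemma clamp_lip T u x : 0 <= T ->
  Rabs (Rmax 0 (Rmin T u) - Rmax 0 (Rmin T x)) <= Rabs (u - x).
Proof.
  intros HT. unfold Rmax, Rmin.
  repeat destruct Rle_dec; unfold Rabs; repeat destruct Rcase_abs; lra.
Qed.

Lemma max_lip u x : Rabs (Rmax 0 u - Rmax 0 x) <= Rabs (u - x).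
Proof.
  unfold Rmax. repeat destruct Rle_dec; unfold Rabs; repeat destruct Rcase_abs; lra.
Qed.
Lemma dmult f g x a b : derivable_pt_lim f x a -> derivable_pt_lim g x b ->
  derivable_pt_lim (fun s => f s * g s) x (a * g x + f x * b).
Proof. intros; apply (derivable_pt_lim_mult f g); auto. Qed.
Lemma dconst c x : derivable_pt_lim (fun _ => c) x 0.
Proof. apply derivable_pt_lim_const. Qed.
Lemma dexpl lam x : derivable_pt_lim (fun s => exp (- (lam * s))) x (exp (- (lam * x)) * - lam).
Proof. apply is_derive_Reals. auto_derive; auto. ring. Qed.

Lemma dpl_eq f x l l' : l' = l -> derivable_pt_lim f x l' -> derivable_pt_lim f x l.
Proof. intros ->; auto. Qed.

Theorem lemma3p2
  (T : R) (U w0 : R -> R)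
  (w : R -> R -> R)
  (wt wy wyy : R -> R -> R) :
  0 < T ->
  continuous_on1 (fun t => 0 <= t <= T) U ->
  (forall t, 0 <= t <= T -> U t <= 0) ->
  continuous_on1 (fun y => 0 <= y) w0 ->
  (forall y, 0 <= y -> 0 <= w0 y) ->
  continuous_on2 (in_HT_closed T) w ->
  (forall t y, in_HT T t y -> derivable_pt_lim (fun s => w s y) t (wt t y)) ->
  (forall t y, in_HT T t y -> derivable_pt_lim (fun z => w t z) y (wy t y)) ->
  (forall t y, in_HT T t y -> derivable_pt_lim (fun z => wy t z) y (wyy t y)) ->
  continuous_on2 (in_HT T) wt ->
  continuous_on2 (in_HT T) wy ->
  continuous_on2 (in_HT T) wyy ->
  (forall t y, in_HT T t y ->
     exists A B,
       integral_eq (fun z => w t z + U t) 0 y A /\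
       improper_integral_eq (fun z => w t z) y B /\
       wt t y - (w t y) ^ 2 + A * wy t y - 2 * U t * w t y + (- B) - wyy t y = 0) ->
  (forall y, 0 <= y -> w 0 y = w0 y) ->
  (forall t, 0 <= t <= T -> w t 0 = - U t) ->
  (forall t, 0 <= t <= T -> forall eps, 0 < eps -> exists M, forall y, M <= y ->
       Rabs (w t y) < eps) ->
  (exists C, forall t y, in_HT T t y -> Rabs (w t y) * exp y <= C) ->
  (forall eps, 0 < eps -> exists M, forall t y, 0 <= t <= T -> M <= y ->
       Rabs (w t y) * exp y < eps) ->
  forall t y, in_HT T t y -> 0 <= w t y.
Proof.
  intros HT HUc HU Hw0c Hw0 Hwc Hwt Hwy Hwyy _ _ _ Heq Hinit Hbd Hfar [C HC] Hdec t1 y1 Hin1.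
  destruct (Rle_or_lt 0 (w t1 y1)) as [|Hneg]; auto. exfalso.
  destruct Hin1 as [[Ht1a Ht1b] Hy1].
  set (lam := Rabs C + 3).
  set (We := fun s y => w (Rmax 0 (Rmin T s)) (Rmax 0 y)).
  set (z := fun s y => We s y * exp y * exp (- (lam * s))).
  assert (Hzw : forall s y, 0 <= s <= T -> 0 <= y -> z s y = w s y * exp y * exp (- (lam * s))).
  { intros s y Hs Hy. unfold z, We. rewrite (Rmin_right T s) by lra.
    rewrite (Rmax_right 0 s) by lra. rewrite (Rmax_right 0 y) by lra. reflexivity. }
  assert (HWc : forall x y, continuity_2d_pt We x y).
  { intros x y eps.
    destruct (Hwc (Rmax 0 (Rmin T x)) (Rmax 0 y)) with (eps := pos eps) as [d [Hd Hd']].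
    { split. split. apply Rmax_l. apply Rmax_lub. lra. apply Rmin_l. apply Rmax_l. }
    apply (cond_pos eps).
    exists (mkposreal d Hd). simpl. intros u v Hu Hv. unfold We. apply Hd'.
    { split. split. apply Rmax_l. apply Rmax_lub. lra. apply Rmin_l. apply Rmax_l. }
    eapply Rle_lt_trans. apply clamp_lip. lra. auto.
    eapply Rle_lt_trans. apply max_lip. auto. }
  assert (Hzc : forall x y, continuity_2d_pt z x y).
  { intros x y. unfold z. apply continuity_2d_pt_mult. apply continuity_2d_pt_mult.
    apply HWc.
    apply (continuity_1d_2d_pt_comp exp (fun _ v => v)). apply derivable_continuous_pt, derivable_pt_exp.
    apply continuity_2d_pt_id2.
    apply (continuity_1d_2d_pt_comp exp (fun u _ => - (lam * u))). apply derivable_continuous_pt, derivable_pt_exp.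
    apply continuity_2d_pt_opp. apply continuity_2d_pt_mult. apply continuity_2d_pt_const.
    apply continuity_2d_pt_id1. }
  assert (Hexp : forall x, 0 < exp x) by apply exp_pos.
  assert (Hz1 : z t1 y1 < 0).
  { rewrite Hzw by lra. assert (H1 := Hexp y1). assert (H2 := Hexp (- (lam * t1))).
    assert (0 < exp y1 * exp (- (lam * t1))) by (apply Rmult_lt_0_compat; auto). nra. }
  set (mu := - z t1 y1).
  destruct (Hdec mu ltac:(unfold mu; lra)) as [M HM].
  set (Y := Rmax M y1).
  destruct (min2d z 0 t1 0 Y ltac:(lra) ltac:(unfold Y; assert (H := Rmax_r M y1); lra) Hzc)
    as [t0 [y0 [Ht0 [Hy0 Hmin]]]].
  assert (Hglob : forall s y, 0 <= s <= t1 -> 0 <= y -> z t0 y0 <= z s y).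
  { intros s y Hs Hy. destruct (Rle_or_lt y Y) as [HyY|HyY]. apply Hmin; auto; lra.
    assert (Hm := HM s y ltac:(lra) ltac:(unfold Y in HyY; assert (H := Rmax_l M y1); lra)).
    assert (Ht1m := Hmin t1 y1 ltac:(lra) ltac:(unfold Y; assert (H := Rmax_r M y1); lra)).
    rewrite (Hzw s y) by lra.
    assert (He1 : exp (- (lam * s)) <= 1).
    { rewrite <- exp_0. destruct (Req_dec (lam * s) 0) as [E|E]. rewrite E, Ropp_0; lra.
      left. apply exp_increasing. assert (0 <= lam) by (unfold lam; assert (H:=Rabs_pos C); lra).
      nra. }
    assert (He2 := Hexp (- (lam * s))). assert (He3 := Hexp y).
    assert (Hab := Rle_abs (- w s y)). rewrite Rabs_Ropp in Hab.
    assert (0 <= Rabs (w s y) * exp y) by (apply Rmult_le_pos; [apply Rabs_pos| lra]).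
    assert (Hx1 : - (Rabs (w s y) * exp y) <= w s y * exp y) by nra.
    assert (Hx2 : - (Rabs (w s y) * exp y) <= w s y * exp y * exp (- (lam * s))).
    { set (q := w s y * exp y) in *. set (e := exp (- (lam * s))) in *.
      destruct (Rle_or_lt 0 q). assert (0 <= q * e) by (apply Rmult_le_pos; lra). lra.
      assert (q <= q * e) by nra. lra. }
    unfold mu in Hm. lra. }
  assert (Hz0 : z t0 y0 < 0).
  { assert (H := Hmin t1 y1 ltac:(lra) ltac:(unfold Y; assert (H := Rmax_r M y1); lra)). lra. }
  assert (Ht0p : 0 < t0).
  { destruct (Rle_lt_or_eq_dec 0 t0 (proj1 Ht0)) as [|E]; auto. subst t0.
    rewrite Hzw in Hz0 by lra. rewrite Hinit in Hz0 by lra.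
    assert (H1 := Hw0 y0 (proj1 Hy0)). assert (H2 := Hexp y0). assert (H3 := Hexp (- (lam * 0))).
    assert (0 <= w0 y0 * exp y0) by (apply Rmult_le_pos; lra). nra. }
  assert (Hy0p : 0 < y0).
  { destruct (Rle_lt_or_eq_dec 0 y0 (proj1 Hy0)) as [|E]; auto. subst y0.
    rewrite Hzw in Hz0 by lra. rewrite Hbd in Hz0 by lra.
    assert (H1 := HU t0 ltac:(lra)). assert (H2 := Hexp 0). assert (H3 := Hexp (- (lam * t0))).
    assert (0 <= - U t0 * exp 0) by (apply Rmult_le_pos; lra). nra. }
  assert (Hin0 : in_HT T t0 y0) by (split; lra).
  set (W := w t0 y0).
  set (E := exp (- (lam * t0))).
  assert (HE : 0 < E) by apply Hexp.
  assert (HP : 0 < exp y0 * E) by (apply Rmult_lt_0_compat; auto).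
  assert (HW : W < 0).
  { rewrite Hzw in Hz0 by lra. fold W E in Hz0. nra. }
  assert (Hdt : wt t0 y0 * exp y0 * E + W * exp y0 * (E * - lam) <= 0).
  { apply (min_left (fun s => w s y0 * exp y0 * exp (- (lam * s))) t0 _ t0).
    assert (D1 := dmult (fun s => w s y0) (fun _ => exp y0) t0 _ _ (Hwt t0 y0 Hin0) (dconst (exp y0) t0)).
    assert (D2 := dmult _ _ t0 _ _ D1 (dexpl lam t0)).
    eapply dpl_eq. 2: exact D2. unfold E, W. ring. auto.
    intros s Hs. rewrite <- !Hzw by lra. apply Hglob; lra. }
  replace (wt t0 y0 * exp y0 * E + W * exp y0 * (E * - lam)) with ((wt t0 y0 - lam * W) * (exp y0 * E)) in Hdt by ring.
  assert (Hwt0 : wt t0 y0 <= lam * W) by nra.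
  set (g := fun y => w t0 y * exp y * E).
  set (g' := fun y => (wy t0 y * exp y + w t0 y * exp y) * E).
  assert (Hgd : forall x, 0 < x -> derivable_pt_lim g x (g' x)).
  { intros x Hx. unfold g, g'.
    replace ((wy t0 x * exp x + w t0 x * exp x) * E) with ((wy t0 x * exp x + w t0 x * exp x) * E + (w t0 x * exp x) * 0) by ring.
    apply (dmult (fun y => w t0 y * exp y) (fun _ => E)). apply dmult. apply Hwy. split; lra.
    apply derivable_pt_lim_exp. apply dconst. }
  assert (Hgm : forall x, 0 <= x -> g y0 <= g x).
  { intros x Hx. unfold g, E. rewrite <- !Hzw by lra. apply Hglob; lra. }
  assert (Hg'0 : g' y0 = 0).
  { apply Rle_antisym.
    apply (min_left g y0 _ y0). apply Hgd; lra. lra. intros; apply Hgm; lra.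
    apply (min_right g y0 _ y0). apply Hgd; lra. lra. intros; apply Hgm; lra. }
  assert (Hg'' : 0 <= ((wyy t0 y0 * exp y0 + wy t0 y0 * exp y0) + (wy t0 y0 * exp y0 + w t0 y0 * exp y0)) * E).
  { apply (min_second g g' y0 _ y0). lra. intros; apply Hgd; lra. auto.
    unfold g'.
    replace (((wyy t0 y0 * exp y0 + wy t0 y0 * exp y0) + (wy t0 y0 * exp y0 + w t0 y0 * exp y0)) * E)
      with (((wyy t0 y0 * exp y0 + wy t0 y0 * exp y0) + (wy t0 y0 * exp y0 + w t0 y0 * exp y0)) * E + (wy t0 y0 * exp y0 + w t0 y0 * exp y0) * 0) by ring.
    apply (dmult (fun y => wy t0 y * exp y + w t0 y * exp y) (fun _ => E)).
    apply derivable_pt_lim_plus. apply dmult. apply Hwyy; auto. apply derivable_pt_lim_exp.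
    apply dmult. apply Hwy; auto. apply derivable_pt_lim_exp. apply dconst.
    intros; apply Hgm; lra. }
  unfold g' in Hg'0. fold W in Hg'0, Hg''.
  replace ((wy t0 y0 * exp y0 + W * exp y0) * E) with ((wy t0 y0 + W) * (exp y0 * E)) in Hg'0 by ring.
  replace (((wyy t0 y0 * exp y0 + wy t0 y0 * exp y0) + (wy t0 y0 * exp y0 + W * exp y0)) * E)
    with ((wyy t0 y0 + 2 * wy t0 y0 + W) * (exp y0 * E)) in Hg'' by ring.
  assert (Hwy0 : wy t0 y0 = - W).
  { apply Rmult_integral in Hg'0. destruct Hg'0; lra. }
  assert (Hwyy0 : 0 <= wyy t0 y0 + 2 * wy t0 y0 + W) by nra.
  destruct (Heq t0 y0 Hin0) as [A [B [HA [HB HEq]]]].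
  fold W in HEq.
  assert (HCp : 0 <= Rabs C) by apply Rabs_pos.
  assert (HAle : A <= Rabs C).
  { destruct HA as [pr HA]. destruct (int_exp (Rabs C) 0 y0 ltac:(lra)) as [pr2 H2].
    assert (Hle := RiemannInt_P19 pr pr2 ltac:(lra)).
    rewrite HA, H2 in Hle.
    assert (He := Hexp (- y0)). rewrite Ropp_0, exp_0 in Hle.
    enough (forall x : R, 0 < x < y0 -> w t0 x + U t0 <= Rabs C * exp (- x)) by
      (assert (HH := Hle H); nra).
    intros x Hx. assert (Hc := HC t0 x ltac:(split; lra)).
    assert (Hu := HU t0 ltac:(lra)). assert (Hab := Rle_abs (w t0 x)).
    assert (Hex := Hexp x). rewrite exp_Ropp.
    assert (Rabs (w t0 x) <= C * / exp x).
    { apply (Rmult_le_reg_r (exp x)); auto. rewrite Rmult_assoc, Rinv_l; lra. }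
    assert (C <= Rabs C) by apply Rle_abs.
    assert (0 < / exp x) by (apply Rinv_0_lt_compat; auto). nra. }
  assert (HBge : W <= B).
  { destruct (Rle_or_lt W B) as [|Hlt]; auto. exfalso.
    destruct (HB ((W - B) / 2) ltac:(lra)) as [M' HM'].
    destruct (HM' (Rmax M' y0) (Rmax_l _ _)) as [I [[pr HI] HIB]].
    destruct (int_exp (W * exp y0) y0 (Rmax M' y0) (Rmax_r _ _)) as [pr2 H2].
    assert (Hle := RiemannInt_P19 pr2 pr (Rmax_r _ _)).
    rewrite HI, H2 in Hle.
    assert (Hle' : W * exp y0 * (exp (- y0) - exp (- Rmax M' y0)) <= I).
    { apply Hle. intros x Hx.
      assert (Hg := Hgm x ltac:(lra)). unfold g in Hg. fold W in Hg.
      assert (Hex := Hexp x). rewrite exp_Ropp.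
      assert (W * exp y0 <= w t0 x * exp x) by nra.
      apply (Rmult_le_reg_r (exp x)); auto. rewrite Rmult_assoc, Rinv_l; lra. }
    rewrite exp_Ropp in Hle'.
    replace (W * exp y0 * (/ exp y0 - exp (- Rmax M' y0))) with (W - W * exp y0 * exp (- Rmax M' y0)) in Hle'
      by (field; apply Rgt_not_eq, Hexp).
    assert (H3 := Hexp (- Rmax M' y0)). assert (H4 := Hexp y0).
    assert (0 < exp y0 * exp (- Rmax M' y0)) by (apply Rmult_lt_0_compat; auto).
    apply Rabs_def2 in HIB. nra. }
  assert (HU0 := HU t0 ltac:(lra)).
  rewrite Hwy0 in HEq, Hwyy0.
  unfold lam in Hwt0. nra.
Qed.
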